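(* Let $G$ be a group and $\kappa$ an infinite cardinal with $\kappa<|G|$. Then the ballean $(G,\mathcal E_{[G]^{<\kappa}})$ is not normal.
   Context: A ballean is a pair $(X,\mathcal E_X)$ where $X$ is a set and $\mathcal E_X$ is a family of subsets of $X\times X$ (entourages) such that: each $E\in\mathcal E_X$ contains the diagonal; for any $E,F\in\mathcal E_X$ there is $D\in\mathcal E_X$ with $E\circ F^{-1}\subset D$; and $\bigcup\mathcal E_X=X\times X$. For $E\in\mathcal E_X$, $x\in X$, $A\subset X$: $E[x]=\{y:(x,y)\in E\}$, $E[A]=\bigcup_{a\in A}E[a]$. $B\subset X$ is bounded if $B\subset E[x]$ for some $E\in\mathcal E_X$, $x\in X$; $\mathcal B_X$ is the family of bounded sets. Sets $A,B$ are asymptotically disjoint if $E[A]\cap E[B]\in\mathcal B_X$ for all $E\in\mathcal E_X$; $U$ is an asymptotic neighborhood of $A$ if $E[A]\setminus U\in\mathcal B_X$ for all $E$; $X$ is normal if any two asymptotically disjoint sets have disjoint asymptotic neighborhoods. For a group $G$ and infinite cardinal $\kappa\le|G|$, $[G]^{<\kappa}$ is the family of subsets of $G$ of cardinality $<\kappa$, and $\mathcal E_{[G]^{<\kappa}}$ is the ball structure on $G$ consisting of the entourages $E_I=\{(x,y)\in G\times G:y\in\{x\}\cup Ix\}$, $I\in[G]^{<\kappa}$. *)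

(* Defs.v *)
From Stdlib Require Import Classical.

Set Implicit Arguments.

Record Group := {
  carrier :> Type;
  gmul : carrier -> carrier -> carrier;
  gone : carrier;
  ginv : carrier -> carrier;
  gmulA : forall x y z, gmul x (gmul y z) = gmul (gmul x y) z;
  gmul1g : forall x, gmul gone x = x;
  gmulg1 : forall x, gmul x gone = x;
  gmulVg : forall x, gmul (ginv x) x = gone;
  gmulgV : forall x, gmul x (ginv x) = gone
}.

Definition card_le (A B : Type) : Prop :=
  exists f : A -> B, forall x y, f x = f y -> x = y.
Definition card_lt (A B : Type) : Prop := card_le A B /\ ~ card_le B A.
Definition infinite_card (K : Type) : Prop := card_le nat K.

(* Subsets of X are predicates X -> Prop; entourages are relations. *)
Definition ball {X : Type} (E : X -> X -> Prop) (x : X) : X -> Prop :=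
  fun y => E x y.
Definition ballS {X : Type} (E : X -> X -> Prop) (A : X -> Prop) : X -> Prop :=
  fun y => exists a, A a /\ E a y.

(* A ball structure: a family Ent of entourages on X. *)
Definition bounded {X : Type} (Ent : (X -> X -> Prop) -> Prop) (B : X -> Prop) :=
  exists E, Ent E /\ exists x, forall y, B y -> ball E x y.

Definition asymp_disjoint {X : Type} (Ent : (X -> X -> Prop) -> Prop)
  (A B : X -> Prop) : Prop :=
  forall E, Ent E -> bounded Ent (fun y => ballS E A y /\ ballS E B y).

Definition asymp_nbhd {X : Type} (Ent : (X -> X -> Prop) -> Prop)
  (U A : X -> Prop) : Prop :=
  forall E, Ent E -> bounded Ent (fun y => ballS E A y /\ ~ U y).

Definition normal_ballean {X : Type} (Ent : (X -> X -> Prop) -> Prop) : Prop :=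
  forall A B : X -> Prop, asymp_disjoint Ent A B ->
    exists U V : X -> Prop,
      asymp_nbhd Ent U A /\ asymp_nbhd Ent V B /\ (forall x, ~ (U x /\ V x)).

(* [G]^{<kappa}: subsets of G of cardinality < kappa (kappa represented by K). *)
Definition small_subset (G : Group) (K : Type) (I : G -> Prop) : Prop :=
  card_lt {x : G | I x} K.

Definition ent_I (G : Group) (I : G -> Prop) : G -> G -> Prop :=
  fun x y => y = x \/ exists i, I i /\ y = gmul G i x.

Definition ent_lt_kappa (G : Group) (K : Type) : (G -> G -> Prop) -> Prop :=
  fun E => exists I, small_subset G K I /\ E = ent_I G I.

(* Main.v *)
Require Import Defs.
From Stdlib Require Import Classical ClassicalEpsilon FunctionalExtensionality PropExtensionality Lia List Cantor.
From mathcomp Require classical_sets boolp.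

Lemma ab_intro (P : Prop) : P -> boolp.asbool P = true.
Proof. intro p. destruct (boolp.asboolP P); [reflexivity|contradiction]. Qed.
Lemma ab_elim (P : Prop) : boolp.asbool P = true -> P.
Proof. intro h. destruct (boolp.asboolP P); [assumption|discriminate]. Qed.

Lemma zorn_prop (T : Type) (t0 : T) (R : T -> T -> Prop) :
  (forall t, R t t) -> (forall r s t, R r s -> R s t -> R r t) ->
  (forall A : T -> Prop, (forall s t, A s -> A t -> R s t \/ R t s) ->
     exists t, forall s, A s -> R s t) ->
  exists t, forall s, R t s -> R s t.
Proof.
  intros Hr Ht Hc.
  destruct (@classical_sets.ZL_preorder T t0 (fun a b => boolp.asbool (R a b))) as [t Ht'].
  - intros t. apply ab_intro. apply Hr.
  - intros r s u H1 H2. apply ab_intro.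
    apply (Ht r s u); apply ab_elim; assumption.
  - intros A HA. destruct (Hc A) as [t Hat].
    + intros s u As Au. destruct (HA s u As Au) as [H|H]; [left|right];
      apply ab_elim; exact H.
    + exists t. intros s As. apply ab_intro. apply Hat; exact As.
  - exists t. intros s Hs. apply ab_elim. apply Ht'. apply ab_intro. exact Hs.
Qed.

Lemma sig_eq (A : Type) (P : A -> Prop) (u v : sig P) : proj1_sig u = proj1_sig v -> u = v.
Proof. destruct u as [a pa], v as [b pb]. simpl. intros ->. f_equal. apply proof_irrelevance. Qed.

Lemma cle_refl (X : Type) : card_le X X.
Proof. exists (fun x => x). auto. Qed.

Lemma cle_trans (X Y Z : Type) : card_le X Y -> card_le Y Z -> card_le X Z.
Proof. intros [f hf] [g hg]. exists (fun x => g (f x)). auto. Qed.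

Definition pinj {X Y : Type} (R : X -> Y -> Prop) :=
  (forall x y y', R x y -> R x y' -> y = y') /\ (forall x x' y, R x y -> R x' y -> x = x').

Lemma compar (X Y : Type) : card_le X Y \/ card_le Y X.
Proof.
  set (T := {R : X -> Y -> Prop | pinj R}).
  set (Rl := fun a b : T => forall x y, proj1_sig a x y -> proj1_sig b x y).
  assert (t0 : T).
  { exists (fun _ _ => False). split; intros; contradiction. }
  destruct (@zorn_prop T t0 Rl) as [t Hmax].
  - intros t x y h; exact h.
  - intros r s u h1 h2 x y h; auto.
  - intros A HA.
    assert (hp : pinj (fun x y => exists a, A a /\ proj1_sig a x y)).
    { split.
      - intros x y y' [a [Aa ha]] [b [Ab hb]].
        destruct (HA a b Aa Ab) as [h|h].
        + destruct (proj2_sig b) as [p1 _]. exact (p1 x y y' (h _ _ ha) hb).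
        + destruct (proj2_sig a) as [p1 _]. exact (p1 x y y' ha (h _ _ hb)).
      - intros x x' y [a [Aa ha]] [b [Ab hb]].
        destruct (HA a b Aa Ab) as [h|h].
        + destruct (proj2_sig b) as [_ p2]. exact (p2 x x' y (h _ _ ha) hb).
        + destruct (proj2_sig a) as [_ p2]. exact (p2 x x' y ha (h _ _ hb)). }
    exists (exist _ _ hp). intros s As x y h. simpl. exists s; auto.
  - destruct t as [R [p1 p2]]. simpl in Hmax.
    destruct (classic (forall x, exists y, R x y)) as [Hall|Hn].
    + left. exists (fun x => proj1_sig (constructive_indefinite_description _ (Hall x))).
      intros a b e.
      destruct (constructive_indefinite_description _ (Hall a)) as [ya ha].
      destruct (constructive_indefinite_description _ (Hall b)) as [yb hb].
      simpl in e. subst. eapply p2; eauto.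
    + destruct (classic (forall y, exists x, R x y)) as [Hall2|Hn2].
      * right. exists (fun y => proj1_sig (constructive_indefinite_description _ (Hall2 y))).
        intros a b e.
        destruct (constructive_indefinite_description _ (Hall2 a)) as [ya ha].
        destruct (constructive_indefinite_description _ (Hall2 b)) as [yb hb].
        simpl in e. subst. eapply p1; eauto.
      * exfalso. apply not_all_ex_not in Hn. destruct Hn as [x0 hx0].
        apply not_all_ex_not in Hn2. destruct Hn2 as [y0 hy0].
        assert (hp : pinj (fun x y => R x y \/ (x = x0 /\ y = y0))).
        { split.
          - intros x y y' [h|[e1 e2]] [h'|[e1' e2']]; subst; auto.
            + eapply p1; eauto.
            + exfalso; apply hx0; eauto.
            + exfalso; apply hx0; eauto.
          - intros x x' y [h|[e1 e2]] [h'|[e1' e2']]; subst; auto.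
            + eapply p2; eauto.
            + exfalso; apply hy0; eauto.
            + exfalso; apply hy0; eauto. }
        specialize (Hmax (exist _ _ hp)). simpl in Hmax.
        assert (R x0 y0).
        { apply Hmax. - intros x y h; left; exact h. - right; auto. }
        apply hx0; eauto.
Qed.

Record PT (K : Type) (e : nat -> K) := mkPT {
  tP : K -> Prop;
  tg : K -> K -> K;
  tN : forall n, tP (e n);
  tmap : forall x y, tP x -> tP y -> tP (tg x y);
  tinj : forall x y x' y', tP x -> tP y -> tP x' -> tP y' -> tg x y = tg x' y' -> x = x' /\ y = y'
}.
Arguments tP {K e}.
Arguments tg {K e}.

Definition PRl {K e} (a b : PT K e) :=
  (forall x, tP a x -> tP b x) /\ (forall x y, tP a x -> tP a y -> tg a x y = tg b x y).

Lemma PT_base (K : Type) (e : nat -> K) (he : forall m n, e m = e n -> m = n) : PT K e.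
Proof.
  set (einv := fun x => epsilon (inhabits 0) (fun n => e n = x)).
  assert (hei : forall n, einv (e n) = n).
  { intro n. unfold einv. apply he. apply (epsilon_spec (inhabits 0) (fun m => e m = e n)). eauto. }
  refine (@mkPT K e (fun x => exists n, x = e n) (fun x y => e (to_nat (einv x, einv y))) _ _ _).
  - intros n; exists n; reflexivity.
  - intros x y _ _. eauto.
  - intros x y x' y' [a ->] [b ->] [c ->] [d ->] h.
    apply he in h. apply to_nat_inj in h. rewrite !hei in h. injection h; intros; subst; auto.
Qed.

Lemma PT_chain (K : Type) (e : nat -> K) (A : PT K e -> Prop) (a0 : PT K e) :
  A a0 -> (forall s t, A s -> A t -> PRl s t \/ PRl t s) ->
  exists t, forall s, A s -> PRl s t.
Proof.
  intros Aa0 HA.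
  assert (up : forall a b, A a -> A b -> exists c, A c /\ PRl a c /\ PRl b c).
  { intros a b Aa Ab. destruct (HA a b Aa Ab) as [h|h].
    - exists b. split; [exact Ab|split; [exact h|split; auto]].
    - exists a. split; [exact Aa|split; [split; auto|exact h]]. }
  set (P := fun x => exists a, A a /\ tP a x).
  set (ch := fun x y => epsilon (inhabits a0) (fun c => A c /\ tP c x /\ tP c y)).
  set (g := fun x y => tg (ch x y) x y).
  assert (key : forall a x y, A a -> tP a x -> tP a y -> g x y = tg a x y).
  { intros a x y Aa hx hy. unfold g.
    assert (hc : A (ch x y) /\ tP (ch x y) x /\ tP (ch x y) y).
    { apply (epsilon_spec (inhabits a0) (fun c => A c /\ tP c x /\ tP c y)). eauto. }
    destruct hc as [Ac [cx cy]].
    destruct (HA a (ch x y) Aa Ac) as [[_ h]|[_ h]].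
    - symmetry; apply h; auto.
    - apply h; auto. }
  assert (two : forall x y, P x -> P y -> exists c, A c /\ tP c x /\ tP c y).
  { intros x y [a [Aa ha]] [b [Ab hb]]. destruct (up a b Aa Ab) as [c [Ac [[h1 _] [h2 _]]]].
    exists c. auto. }
  assert (tN' : forall n, P (e n)). { intro n. exists a0. split; auto. apply tN. }
  assert (tmap' : forall x y, P x -> P y -> P (g x y)).
  { intros x y hx hy. destruct (two x y hx hy) as [c [Ac [cx cy]]].
    rewrite (key c x y Ac cx cy). exists c. split; [exact Ac| apply tmap; auto]. }
  assert (tinj' : forall x y x' y', P x -> P y -> P x' -> P y' -> g x y = g x' y' -> x = x' /\ y = y').
  { intros x y x' y' hx hy hx' hy' h.
    destruct (two x y hx hy) as [c1 [A1 [c1x c1y]]].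
    destruct (two x' y' hx' hy') as [c2 [A2 [c2x c2y]]].
    destruct (up c1 c2 A1 A2) as [c [Ac [[u1 _] [u2 _]]]].
    rewrite (key c x y Ac (u1 _ c1x) (u1 _ c1y)) in h.
    rewrite (key c x' y' Ac (u2 _ c2x) (u2 _ c2y)) in h.
    exact (@tinj K e c x y x' y' (u1 _ c1x) (u1 _ c1y) (u2 _ c2x) (u2 _ c2y) h). }
  exists (@mkPT K e P g tN' tmap' tinj').
  intros s As. split; simpl.
  - intros x hx. exists s; auto.
  - intros x y hx hy. symmetry. apply key; auto.
Qed.

Definition dec (P : Prop) : bool := if excluded_middle_informative P then true else false.
Lemma dec_t (P : Prop) : P -> dec P = true.
Proof. unfold dec; destruct (excluded_middle_informative P); auto; contradiction. Qed.
Lemma dec_f (P : Prop) : ~ P -> dec P = false.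
Proof. unfold dec; destruct (excluded_middle_informative P); auto; contradiction. Qed.

Lemma PT_extend (K : Type) (e : nat -> K) (he : forall m n, e m = e n -> m = n)
  (t : PT K e) (psi : K -> K) :
  (forall x, tP t x -> ~ tP t (psi x)) ->
  (forall x y, tP t x -> tP t y -> psi x = psi y -> x = y) ->
  exists t', PRl t t' /\ ~ PRl t' t.
Proof.
  intros hps hpi.
  set (P := tP t). set (g := tg t).
  set (P' := fun x => P x \/ exists z, P z /\ x = psi z).
  set (pinv := fun x => epsilon (inhabits (e 0)) (fun z => P z /\ x = psi z)).
  assert (hpinv : forall x, P' x -> ~ P x -> P (pinv x) /\ x = psi (pinv x)).
  { intros x [h|h] hn; [contradiction|].
    apply (epsilon_spec (inhabits (e 0)) (fun z => P z /\ x = psi z)). exact h. }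
  set (cd := fun x y => if dec (P x) then 0 else if dec (P y) then 1 else 2).
  set (ca := fun x y : K => if dec (P x) then x else pinv x).
  set (cb := fun x y : K => if dec (P y) then y else pinv y).
  assert (hdec : forall x y, P' x -> P' y -> ~ (P x /\ P y) ->
     P (ca x y) /\ P (cb x y) /\
     (x = if Nat.eqb (cd x y) 0 then ca x y else psi (ca x y)) /\
     (y = if Nat.eqb (cd x y) 1 then cb x y else psi (cb x y))).
  { intros x y hx hy hn. unfold ca, cb, cd.
    destruct (classic (P x)) as [px|px]; destruct (classic (P y)) as [py|py].
    - exfalso; auto.
    - rewrite (dec_t _ px), (dec_f _ py). simpl.
      destruct (hpinv y hy py) as [h1 h2]. auto.
    - rewrite (dec_f _ px), (dec_t _ py). simpl.
      destruct (hpinv x hx px) as [h1 h2]. auto.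
    - rewrite (dec_f _ px), (dec_f _ py). simpl.
      destruct (hpinv x hx px) as [h1 h2]. destruct (hpinv y hy py) as [h3 h4]. auto. }
  assert (hcd : forall x y, cd x y = 0 \/ cd x y = 1 \/ cd x y = 2).
  { intros x y; unfold cd. destruct (dec (P x)); destruct (dec (P y)); auto. }
  set (g' := fun x y => if dec (P x /\ P y) then g x y
                        else psi (g (e (cd x y)) (g (ca x y) (cb x y)))).
  assert (tN' : forall n, P' (e n)). { intro n. left. apply tN. }
  assert (tmap' : forall x y, P' x -> P' y -> P' (g' x y)).
  { intros x y hx hy. unfold g'. destruct (classic (P x /\ P y)) as [h|h].
    - rewrite (dec_t _ h). left. apply tmap; tauto.
    - rewrite (dec_f _ h). right. destruct (hdec x y hx hy h) as [h1 [h2 _]].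
      eexists; split; [|reflexivity]. apply tmap; [apply tN|apply tmap; auto]. }
  assert (tinj' : forall x y x' y', P' x -> P' y -> P' x' -> P' y' -> g' x y = g' x' y' -> x = x' /\ y = y').
  { intros x y x' y' hx hy hx' hy'. unfold g'.
    destruct (classic (P x /\ P y)) as [h|h]; destruct (classic (P x' /\ P y')) as [h'|h'].
    - rewrite (dec_t _ h), (dec_t _ h'). intro q. apply (@tinj K e t) in q; try tauto.
    - rewrite (dec_t _ h), (dec_f _ h'). intro q. exfalso.
      destruct (hdec x' y' hx' hy' h') as [h1 [h2 _]].
      apply (hps (g (e (cd x' y')) (g (ca x' y') (cb x' y')))).
      + apply tmap; [apply tN|apply tmap; auto].
      + rewrite <- q. apply tmap; tauto.
    - rewrite (dec_f _ h), (dec_t _ h'). intro q. exfalso.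
      destruct (hdec x y hx hy h) as [h1 [h2 _]].
      apply (hps (g (e (cd x y)) (g (ca x y) (cb x y)))).
      + apply tmap; [apply tN|apply tmap; auto].
      + rewrite q. apply tmap; tauto.
    - rewrite (dec_f _ h), (dec_f _ h'). intro q.
      destruct (hdec x y hx hy h) as [h1 [h2 [ex ey]]].
      destruct (hdec x' y' hx' hy' h') as [h1' [h2' [ex' ey']]].
      apply hpi in q; [| apply tmap; [apply tN|apply tmap; auto] | apply tmap; [apply tN|apply tmap; auto]].
      apply (@tinj K e t) in q; [| apply tN | apply tmap; auto | apply tN | apply tmap; auto].
      destruct q as [q1 q2]. apply he in q1.
      apply (@tinj K e t) in q2; auto. destruct q2 as [q2 q3].
      split.
      + rewrite ex, ex'. rewrite q1, q2. reflexivity.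
      + rewrite ey, ey'. rewrite q1, q3. reflexivity. }
  exists (@mkPT K e P' g' tN' tmap' tinj').
  split.
  - split; simpl.
    + intros x hx. left; exact hx.
    + intros x y hx hy. unfold g'. rewrite dec_t; auto.
  - intros [h _]. simpl in h.
    apply (hps (e 0) (tN _ _ t 0)). apply h. right. exists (e 0). split; auto. apply tN.
Qed.

Lemma KK (K : Type) (e : nat -> K) (he : forall m n, e m = e n -> m = n) : card_le (K * K) K.
Proof.
  set (t0 := PT_base K e he).
  destruct (@zorn_prop (PT K e) t0 PRl) as [t Hmax].
  - intro a; split; auto.
  - intros r s u [h1 h2] [h3 h4]; split; auto.
    intros x y hx hy. rewrite (h2 x y hx hy). apply h4; auto.
  - intros A HA. destruct (classic (exists a, A a)) as [[a Aa]|hn].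
    + exact (PT_chain K e A a Aa HA).
    + exists t0. intros s As; exfalso; eauto.
  - assert (claim : exists phi : K -> K, (forall x, tP t (phi x)) /\
                    (forall x y, phi x = phi y -> x = y)).
    { destruct (compar {x | ~ tP t x} {x | tP t x}) as [[q hq]|[p hp]].
      - exists (fun x => match excluded_middle_informative (tP t x) with
                         | left _ => tg t (e 0) x
                         | right np => tg t (e 1) (proj1_sig (q (exist _ x np))) end).
        split.
        + intro x. destruct (excluded_middle_informative (tP t x)).
          * apply tmap; auto. apply tN.
          * apply tmap; [apply tN|]. apply (proj2_sig (q _)).
        + intros x y.
          destruct (excluded_middle_informative (tP t x)) as [px|px];
          destruct (excluded_middle_informative (tP t y)) as [py|py]; intro h;
          apply (@tinj K e t) in h; try apply tN; try assumption;
          try apply (proj2_sig (q _)); destruct h as [h1 h2]; try (apply he in h1; discriminate).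
          * exact h2.
          * apply sig_eq in h2. apply hq in h2. injection h2. auto.
      - exfalso.
        set (psi := fun x => match excluded_middle_informative (tP t x) with
                      | left h => proj1_sig (p (exist _ x h)) | right _ => x end).
        destruct (PT_extend K e he t psi) as [t' [h1 h2]].
        + intros x hx. unfold psi. destruct (excluded_middle_informative (tP t x)); [|contradiction].
          apply (proj2_sig (p _)).
        + intros x y hx hy. unfold psi.
          destruct (excluded_middle_informative (tP t x)); [|contradiction].
          destruct (excluded_middle_informative (tP t y)); [|contradiction].
          intro h. apply sig_eq in h. apply hp in h. injection h; auto.
        + apply h2. apply Hmax. exact h1. }
    destruct claim as [phi [hphi iphi]].
    exists (fun ab => tg t (phi (fst ab)) (phi (snd ab))).
    intros [a b] [c d] h. simpl in h.
    apply (@tinj K e t) in h; auto. destruct h as [h1 h2]. apply iphi in h1. apply iphi in h2.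
    subst; reflexivity.
Qed.

Lemma pigeon (N : nat) : forall w : nat -> nat, (forall m n, w m = w n -> m = n) -> (forall n, w n < N) -> False.
Proof.
  induction N as [|N IH]; intros w hw hb.
  - specialize (hb 0). lia.
  - destruct (classic (exists n0, w n0 = N)) as [[n0 h0]|hn].
    + apply (IH (fun n => w (if Nat.ltb n n0 then n else S n))).
      * intros m n h. destruct (Nat.ltb m n0) eqn:E1; destruct (Nat.ltb n n0) eqn:E2;
        apply hw in h; apply PeanoNat.Nat.ltb_lt in E1 || apply PeanoNat.Nat.ltb_ge in E1;
        apply PeanoNat.Nat.ltb_lt in E2 || apply PeanoNat.Nat.ltb_ge in E2; lia.
      * intro n. assert (w (if Nat.ltb n n0 then n else S n) <> N).
        { intro h. rewrite <- h0 in h. apply hw in h.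
          destruct (Nat.ltb n n0) eqn:E1;
          apply PeanoNat.Nat.ltb_lt in E1 || apply PeanoNat.Nat.ltb_ge in E1; lia. }
        specialize (hb (if Nat.ltb n n0 then n else S n)). lia.
    + apply (IH w hw). intro n. specialize (hb n).
      assert (w n <> N) by (intro h; apply hn; eauto). lia.
Qed.

Lemma incr_inj (h : nat -> nat) : (forall k, h k < h (S k)) -> forall m n, h m = h n -> m = n.
Proof.
  intros hi.
  assert (mono : forall m d, h m < h (S (d + m))).
  { intros m d. induction d as [|d IH]; simpl; [apply hi|]. specialize (hi (S (d + m))). lia. }
  intros m n e. destruct (PeanoNat.Nat.lt_trichotomy m n) as [l|[l|l]]; auto.
  - specialize (mono m (n - S m)). replace (S (n - S m + m)) with n in mono by lia. lia.
  - specialize (mono n (m - S n)). replace (S (m - S n + n)) with m in mono by lia. lia.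
Qed.

Lemma unbounded_inj (X : Type) (iota : X -> nat) (s : nat -> X) :
  (forall M, exists n, M <= iota (s n)) -> card_le nat X.
Proof.
  intros hu.
  set (nx := fix nx k := match k with 0 => 0 | S k =>
       epsilon (inhabits 0) (fun n => S (iota (s (nx k))) <= iota (s n)) end).
  assert (hinc : forall k, iota (s (nx k)) < iota (s (nx (S k)))).
  { intro k. simpl. apply (epsilon_spec (inhabits 0) (fun n => S (iota (s (nx k))) <= iota (s n))).
    apply hu. }
  exists (fun k => s (nx k)). intros a b h.
  apply (incr_inj (fun k => iota (s (nx k))) hinc). rewrite h; reflexivity.
Qed.

Lemma lin_inj a b a' b' M : b < M -> b' < M -> a * M + b = a' * M + b' -> a = a' /\ b = b'.
Proof.
  intros h1 h2 h.
  destruct (PeanoNat.Nat.lt_trichotomy a a') as [l|[l|l]].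
  - assert (a' * M >= (a + 1) * M) by (apply PeanoNat.Nat.mul_le_mono_r; lia). lia.
  - subst. lia.
  - assert (a * M >= (a' + 1) * M) by (apply PeanoNat.Nat.mul_le_mono_r; lia). lia.
Qed.

Lemma nat_prod (X : Type) : card_le nat (X * X) -> card_le nat X.
Proof.
  intros [e he]. destruct (compar nat X) as [h|[iota hi]]; auto.
  destruct (classic (forall M, exists n, M <= iota (fst (e n)))) as [u|u].
  { exact (unbounded_inj X iota (fun n => fst (e n)) u). }
  destruct (classic (forall M, exists n, M <= iota (snd (e n)))) as [u'|u'].
  { exact (unbounded_inj X iota (fun n => snd (e n)) u'). }
  exfalso.
  apply not_all_ex_not in u. destruct u as [M1 h1].
  apply not_all_ex_not in u'. destruct u' as [M2 h2].
  set (M := M1 + M2).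
  assert (b1 : forall n, iota (fst (e n)) < M).
  { intro n. destruct (PeanoNat.Nat.lt_ge_cases (iota (fst (e n))) M1); [unfold M; lia|].
    exfalso; apply h1; eauto. }
  assert (b2 : forall n, iota (snd (e n)) < M).
  { intro n. destruct (PeanoNat.Nat.lt_ge_cases (iota (snd (e n))) M2); [unfold M; lia|].
    exfalso; apply h2; eauto. }
  apply (pigeon (M * M) (fun n => iota (fst (e n)) * M + iota (snd (e n)))).
  - intros m n h.
    assert (q : iota (fst (e m)) = iota (fst (e n)) /\ iota (snd (e m)) = iota (snd (e n))).
    { pose proof (b1 m) as c1. pose proof (b1 n) as c1'. pose proof (b2 m) as c2.
      pose proof (b2 n) as c2'. apply (lin_inj _ _ _ _ M); auto. }
    destruct q as [q1 q2]. apply hi in q1. apply hi in q2. apply he.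
    destruct (e m), (e n); simpl in *; subst; reflexivity.
  - intro n. specialize (b1 n). specialize (b2 n). nia.
Qed.

Lemma KKi (K : Type) : infinite_card K -> card_le (K * K) K.
Proof. intros [e he]. exact (KK K e he). Qed.

Lemma prod_le (X Y K : Type) : infinite_card K -> card_le X K -> card_le Y K -> card_le (X * Y) K.
Proof.
  intros hK [f hf] [g hg]. apply (cle_trans _ (K * K)); [|apply KKi; auto].
  exists (fun p => (f (fst p), g (snd p))). intros [a b] [c d] h. injection h; intros.
  apply hf in H0. apply hg in H. subst; auto.
Qed.

Lemma bool_le (K : Type) : infinite_card K -> card_le bool K.
Proof.
  intros [e he]. exists (fun b : bool => if b then e 1 else e 0).
  intros [] [] h; auto; apply he in h; discriminate.
Qed.

Lemma boolK_le (K : Type) : infinite_card K -> card_le (bool * K) K.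
Proof. intros hK. apply prod_le; auto. apply bool_le; auto. apply cle_refl. Qed.

Lemma opt_inf (X : Type) : infinite_card X -> card_le (option X) X.
Proof.
  intros [e he].
  set (einv := fun x => epsilon (inhabits 0) (fun n => x = e n)).
  assert (hei : forall x, (exists n, x = e n) -> x = e (einv x)).
  { intros x h. apply (epsilon_spec (inhabits 0) (fun n => x = e n)). exact h. }
  exists (fun o => match o with None => e 0 | Some x =>
            if dec (exists n, x = e n) then e (S (einv x)) else x end).
  intros [x|] [y|] h.
  - destruct (classic (exists n, x = e n)) as [hx|hx]; destruct (classic (exists n, y = e n)) as [hy|hy].
    + rewrite (dec_t _ hx), (dec_t _ hy) in h. apply he in h. injection h; intro h'.
      rewrite (hei x hx), (hei y hy), h'. reflexivity.
    + rewrite (dec_t _ hx), (dec_f _ hy) in h. exfalso; apply hy; eauto.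
    + rewrite (dec_f _ hx), (dec_t _ hy) in h. exfalso; apply hx; eauto.
    + rewrite (dec_f _ hx), (dec_f _ hy) in h. subst; auto.
  - destruct (classic (exists n, x = e n)) as [hx|hx].
    + rewrite (dec_t _ hx) in h. apply he in h. discriminate.
    + rewrite (dec_f _ hx) in h. exfalso; apply hx; eauto.
  - destruct (classic (exists n, y = e n)) as [hy|hy].
    + rewrite (dec_t _ hy) in h. apply he in h. discriminate.
    + rewrite (dec_f _ hy) in h. exfalso; apply hy; eauto.
  - reflexivity.
Qed.

Lemma nat_opt (X : Type) : card_le nat (option X) -> card_le nat X.
Proof.
  intros [u hu].
  assert (d : X).
  { destruct (u 0) as [x|] eqn:E0; [exact x|].
    destruct (u 1) as [x|] eqn:E1; [exact x|].
    exfalso. rewrite <- E1 in E0. apply hu in E0. discriminate. }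
  destruct (classic (exists n0, u n0 = None)) as [[n0 h0]|hn].
  - set (idx := fun n => if Nat.ltb n n0 then n else S n).
    exists (fun n => match u (idx n) with Some x => x | None => d end).
    assert (hs : forall n, u (idx n) <> None).
    { intros n h. rewrite <- h0 in h. apply hu in h. unfold idx in h.
      destruct (Nat.ltb n n0) eqn:E; apply PeanoNat.Nat.ltb_lt in E || apply PeanoNat.Nat.ltb_ge in E; lia. }
    intros m n h.
    destruct (u (idx m)) as [x|] eqn:Em; [|exfalso; apply (hs m); auto].
    destruct (u (idx n)) as [y|] eqn:En; [|exfalso; apply (hs n); auto].
    subst. rewrite <- En in Em. apply hu in Em. unfold idx in Em.
    destruct (Nat.ltb m n0) eqn:E1; destruct (Nat.ltb n n0) eqn:E2;
    apply PeanoNat.Nat.ltb_lt in E1 || apply PeanoNat.Nat.ltb_ge in E1;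
    apply PeanoNat.Nat.ltb_lt in E2 || apply PeanoNat.Nat.ltb_ge in E2; lia.
  - exists (fun n => match u n with Some x => x | None => d end).
    intros m n h.
    destruct (u m) as [x|] eqn:Em; [|exfalso; apply hn; eauto].
    destruct (u n) as [y|] eqn:En; [|exfalso; apply hn; eauto].
    subst. rewrite <- En in Em. apply hu in Em. exact Em.
Qed.

Lemma small_sub (X Y K : Type) : card_le X Y -> card_lt Y K -> card_lt X K.
Proof.
  intros h [h1 h2]. split.
  - eapply cle_trans; eauto.
  - intro h3. apply h2. eapply cle_trans; eauto.
Qed.

Lemma small_opt (X K : Type) : infinite_card K -> card_lt X K -> card_lt (option X) K.
Proof.
  intros hK [h1 h2]. split.
  - apply (cle_trans _ (option K)); [|apply opt_inf; auto].
    destruct h1 as [f hf]. exists (fun o => match o with None => None | Some x => Some (f x) end).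
    intros [a|] [b|] h; try discriminate; auto. injection h; intro; f_equal; auto.
  - intro h3. destruct (classic (card_le nat X)) as [hn|hn].
    + apply h2. eapply cle_trans; [exact h3|]. apply opt_inf; auto.
    + apply hn. apply nat_opt. eapply cle_trans; eauto.
Qed.

Lemma small_sq (X K : Type) : infinite_card K -> card_lt X K -> card_lt (X * X) K.
Proof.
  intros hK [h1 h2]. split.
  - apply prod_le; auto.
  - intro h3. destruct (classic (card_le nat X)) as [hn|hn].
    + apply h2. eapply cle_trans; [exact h3|]. apply KKi; auto.
    + apply hn. apply nat_prod. eapply cle_trans; eauto.
Qed.

Lemma list_le (K : Type) : infinite_card K -> card_le (list K) K.
Proof.
  intros hK. destruct (KKi K hK) as [pi hpi]. destruct hK as [e he].
  set (enc' := fix enc' (l : list K) := match l with nil => e 0 | cons k l => pi (k, enc' l) end).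
  exists (fun l => pi (e (length l), enc' l)).
  intros l1 l2 h. apply hpi in h. injection h; intros h2 h1. apply he in h1. clear h.
  revert l2 h1 h2. induction l1 as [|a l1 IH]; intros [|b l2] h1 h2; simpl in *; try discriminate; auto.
  apply hpi in h2. injection h2; intros h3 h4. subst. f_equal. apply IH; auto.
Qed.



Lemma gcancel_l (G : Group) (x y z : G) : gmul G x y = gmul G x z -> y = z.
Proof.
  intro h. rewrite <- (gmul1g G y), <- (gmul1g G z), <- (gmulVg G x), <- !gmulA, h. reflexivity.
Qed.

Lemma ginv_inv (G : Group) (x : G) : ginv G (ginv G x) = x.
Proof.
  apply (gcancel_l G (ginv G x)). rewrite gmulgV, gmulVg. reflexivity.
Qed.

Lemma ginv_mul (G : Group) (x y : G) : ginv G (gmul G x y) = gmul G (ginv G y) (ginv G x).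
Proof.
  apply (gcancel_l G (gmul G x y)). rewrite gmulgV.
  rewrite <- gmulA, (gmulA G y), gmulgV, gmul1g, gmulgV. reflexivity.
Qed.

Lemma ginv_one (G : Group) : ginv G (gone G) = gone G.
Proof. rewrite <- (gmul1g G (ginv G (gone G))). apply gmulgV. Qed.

Record subgroup (G : Group) := {
  sg :> G -> Prop;
  sg1 : sg (gone G);
  sgm : forall x y, sg x -> sg y -> sg (gmul G x y);
  sgi : forall x, sg x -> sg (ginv G x)
}.

Definition rep {X : Type} (R : X -> X -> Prop) (a : X) : X := epsilon (inhabits a) (R a).

Lemma rep_spec {X} (R : X -> X -> Prop) (hr : forall a, R a a) a : R a (rep R a).
Proof. unfold rep. apply epsilon_spec. exists a; auto. Qed.

Lemma rep_eq {X} (R : X -> X -> Prop) (hs : forall a b, R a b -> R b a)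
  (ht : forall a b c, R a b -> R b c -> R a c) a b : R a b -> rep R a = rep R b.
Proof.
  intro h. unfold rep.
  assert (E : R a = R b).
  { apply functional_extensionality. intro z. apply propositional_extensionality.
    split; intro q; eauto. }
  rewrite E. f_equal. apply proof_irrelevance.
Qed.

Lemma rep_eq_inv {X} (R : X -> X -> Prop) (hr : forall a, R a a) (hs : forall a b, R a b -> R b a)
  (ht : forall a b c, R a b -> R b c -> R a c) a b : rep R a = rep R b -> R a b.
Proof.
  intro h. pose proof (rep_spec R hr a) as h1. pose proof (rep_spec R hr b) as h2.
  rewrite h in h1. eauto.
Qed.

Lemma rep_idem {X} (R : X -> X -> Prop) (hr : forall a, R a a) (hs : forall a b, R a b -> R b a)
  (ht : forall a b c, R a b -> R b c -> R a c) a : rep R (rep R a) = rep R a.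
Proof. symmetry. apply rep_eq; auto. apply rep_spec; auto. Qed.

Arguments sg {G}.
Arguments sg1 {G}.
Arguments sgm {G}.
Arguments sgi {G}.

Definition lrel {G : Group} (H : subgroup G) (a b : G) := sg H (gmul G (ginv G a) b).
Definition rrel {G : Group} (H : subgroup G) (a b : G) := sg H (gmul G a (ginv G b)).
Definition drel {G : Group} (H : subgroup G) (a b : G) :=
  exists h1 h2, sg H h1 /\ sg H h2 /\ b = gmul G (gmul G h1 a) h2.

Lemma lrel_refl {G} (H : subgroup G) a : lrel H a a.
Proof. unfold lrel. rewrite gmulVg. apply sg1. Qed.
Lemma lrel_sym {G} (H : subgroup G) a b : lrel H a b -> lrel H b a.
Proof. unfold lrel. intro h. apply sgi in h. rewrite ginv_mul, ginv_inv in h. exact h. Qed.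
Lemma lrel_trans {G} (H : subgroup G) a b c : lrel H a b -> lrel H b c -> lrel H a c.
Proof.
  unfold lrel. intros h1 h2. pose proof (sgm H _ _ h1 h2) as h.
  rewrite <- gmulA, (gmulA G b), gmulgV, gmul1g in h. exact h.
Qed.
Lemma rrel_refl {G} (H : subgroup G) a : rrel H a a.
Proof. unfold rrel. rewrite gmulgV. apply sg1. Qed.
Lemma rrel_sym {G} (H : subgroup G) a b : rrel H a b -> rrel H b a.
Proof. unfold rrel. intro h. apply sgi in h. rewrite ginv_mul, ginv_inv in h. exact h. Qed.
Lemma rrel_trans {G} (H : subgroup G) a b c : rrel H a b -> rrel H b c -> rrel H a c.
Proof.
  unfold rrel. intros h1 h2. pose proof (sgm H _ _ h1 h2) as h.
  rewrite <- gmulA, (gmulA G (ginv G b)), gmulVg, gmul1g in h. exact h.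
Qed.
Lemma drel_refl {G} (H : subgroup G) a : drel H a a.
Proof. exists (gone G), (gone G). repeat split; try apply sg1. rewrite gmul1g, gmulg1. auto. Qed.
Lemma drel_sym {G} (H : subgroup G) a b : drel H a b -> drel H b a.
Proof.
  intros [h1 [h2 [p1 [p2 ->]]]]. exists (ginv G h1), (ginv G h2).
  repeat split; try (apply sgi; auto).
  rewrite <- !gmulA, gmulgV, gmulg1, !gmulA, gmulVg, gmul1g. reflexivity.
Qed.
Lemma drel_trans {G} (H : subgroup G) a b c : drel H a b -> drel H b c -> drel H a c.
Proof.
  intros [h1 [h2 [p1 [p2 ->]]]] [k1 [k2 [q1 [q2 ->]]]]. exists (gmul G k1 h1), (gmul G h2 k2).
  repeat split; try (apply sgm; auto). rewrite !gmulA. reflexivity.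
Qed.

Definition lrep {G} (H : subgroup G) := rep (lrel H).
Definition rrep {G} (H : subgroup G) := rep (rrel H).
Definition drep {G} (H : subgroup G) := rep (drel H).

Lemma lrep_spec {G} (H : subgroup G) a : lrel H a (lrep H a).
Proof. unfold lrep, rrep, drep. apply rep_spec, lrel_refl. Qed.
Lemma rrep_spec {G} (H : subgroup G) a : rrel H a (rrep H a).
Proof. unfold lrep, rrep, drep. apply rep_spec, rrel_refl. Qed.
Lemma drep_spec {G} (H : subgroup G) a : drel H a (drep H a).
Proof. unfold lrep, rrep, drep. apply rep_spec, drel_refl. Qed.
Lemma lrep_eq {G} (H : subgroup G) a b : lrel H a b -> lrep H a = lrep H b.
Proof. unfold lrep, rrep, drep. apply rep_eq; [apply lrel_sym|apply lrel_trans]. Qed.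
Lemma rrep_eq {G} (H : subgroup G) a b : rrel H a b -> rrep H a = rrep H b.
Proof. unfold lrep, rrep, drep. apply rep_eq; [apply rrel_sym|apply rrel_trans]. Qed.
Lemma drep_eq {G} (H : subgroup G) a b : drel H a b -> drep H a = drep H b.
Proof. unfold lrep, rrep, drep. apply rep_eq; [apply drel_sym|apply drel_trans]. Qed.
Lemma lrep_inv {G} (H : subgroup G) a b : lrep H a = lrep H b -> lrel H a b.
Proof. unfold lrep, rrep, drep. apply rep_eq_inv; [apply lrel_refl|apply lrel_sym|apply lrel_trans]. Qed.
Lemma rrep_inv {G} (H : subgroup G) a b : rrep H a = rrep H b -> rrel H a b.
Proof. unfold lrep, rrep, drep. apply rep_eq_inv; [apply rrel_refl|apply rrel_sym|apply rrel_trans]. Qed.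
Lemma drep_inv {G} (H : subgroup G) a b : drep H a = drep H b -> drel H a b.
Proof. unfold lrep, rrep, drep. apply rep_eq_inv; [apply drel_refl|apply drel_sym|apply drel_trans]. Qed.
Lemma lrep_idem {G} (H : subgroup G) a : lrep H (lrep H a) = lrep H a.
Proof. unfold lrep, rrep, drep. apply rep_idem; [apply lrel_refl|apply lrel_sym|apply lrel_trans]. Qed.
Lemma rrep_idem {G} (H : subgroup G) a : rrep H (rrep H a) = rrep H a.
Proof. unfold lrep, rrep, drep. apply rep_idem; [apply rrel_refl|apply rrel_sym|apply rrel_trans]. Qed.
Lemma drep_idem {G} (H : subgroup G) a : drep H (drep H a) = drep H a.
Proof. unfold lrep, rrep, drep. apply rep_idem; [apply drel_refl|apply drel_sym|apply drel_trans]. Qed.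

Lemma lrel_drel {G} (H : subgroup G) a b : lrel H a b -> drel H a b.
Proof.
  unfold lrel. intro h. exists (gone G), (gmul G (ginv G a) b). repeat split; auto; try apply sg1.
  rewrite gmul1g, gmulA, gmulgV, gmul1g. reflexivity.
Qed.
Lemma rrel_drel {G} (H : subgroup G) a b : rrel H a b -> drel H a b.
Proof.
  unfold rrel. intro h. apply drel_sym. exists (gmul G a (ginv G b)), (gone G).
  repeat split; auto; try apply sg1.
  rewrite gmulg1, <- gmulA, gmulVg, gmulg1. reflexivity.
Qed.
Lemma drel_ginv {G} (H : subgroup G) a b : drel H a b -> drel H (ginv G a) (ginv G b).
Proof.
  intros [h1 [h2 [p1 [p2 ->]]]]. exists (ginv G h2), (ginv G h1).
  repeat split; try (apply sgi; auto). rewrite !ginv_mul, gmulA. reflexivity.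
Qed.
Lemma lrel_ginv {G} (H : subgroup G) a b : lrel H (ginv G a) (ginv G b) <-> rrel H a b.
Proof. unfold lrel, rrel. rewrite ginv_inv. tauto. Qed.


Definition LeftS {G : Group} (H : subgroup G) (d z : G) := lrep H z = z /\ drep H z = d.
Definition RightS {G : Group} (H : subgroup G) (d z : G) := rrep H z = z /\ drep H z = d.
Definition good_spec {G : Group} (H : subgroup G) (d : G) (iota : G -> G) :=
  (forall r, RightS H d r -> LeftS H d (iota r)) /\
  (forall r1 r2, RightS H d r1 -> RightS H d r2 -> iota r1 = iota r2 -> r1 = r2).
Definition Good {G : Group} (H : subgroup G) (d : G) := exists iota, good_spec H d iota.
Definition iotaF {G : Group} (H : subgroup G) (d : G) : G -> G :=
  epsilon (inhabits (fun x : G => x)) (good_spec H d).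
Lemma iotaF_spec {G : Group} (H : subgroup G) d : Good H d -> good_spec H d (iotaF H d).
Proof. intro h. unfold iotaF. apply epsilon_spec. exact h. Qed.

Definition pt {G : Group} (H : subgroup G) (r l : G) : G :=
  epsilon (inhabits r) (fun x => rrel H x r /\ lrel H l x).
Lemma pt_spec {G : Group} (H : subgroup G) r l :
  drep H r = drep H l -> rrel H (pt H r l) r /\ lrel H l (pt H r l).
Proof.
  intro h. apply drep_inv in h. destruct h as [h1 [h2 [p1 [p2 ->]]]].
  unfold pt. apply (epsilon_spec (inhabits r) (fun x => rrel H x r /\ lrel H _ x)).
  exists (gmul G h1 r). split.
  - unfold rrel. rewrite <- gmulA, gmulgV, gmulg1. exact p1.
  - unfold lrel. rewrite !ginv_mul, <- !gmulA, (gmulA G (ginv G h1)), gmulVg, gmul1g, gmulVg, gmulg1.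
    apply sgi; exact p2.
Qed.

Definition Bset {G : Group} (H : subgroup G) (b : G) :=
  exists r, rrep H r = r /\ Good H (drep H r) /\ b = pt H r (iotaF H (drep H r) r).

Lemma B_unique {G : Group} (H : subgroup G) b1 b2 :
  Bset H b1 -> Bset H b2 -> lrel H b1 b2 -> b1 = b2.
Proof.
  intros [r1 [e1 [g1 ->]]] [r2 [e2 [g2 ->]]] hl.
  destruct (iotaF_spec H _ g1) as [s1 i1]. destruct (iotaF_spec H _ g2) as [s2 i2].
  destruct (s1 r1 (conj e1 eq_refl)) as [l1 d1]. destruct (s2 r2 (conj e2 eq_refl)) as [l2 d2].
  destruct (pt_spec H r1 (iotaF H (drep H r1) r1) (eq_sym d1)) as [_ q1].
  destruct (pt_spec H r2 (iotaF H (drep H r2) r2) (eq_sym d2)) as [_ q2].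
  assert (hl' : lrel H (iotaF H (drep H r1) r1) (iotaF H (drep H r2) r2)).
  { eapply lrel_trans; [exact q1|]. eapply lrel_trans; [exact hl|]. apply lrel_sym; exact q2. }
  apply lrep_eq in hl'. rewrite l1, l2 in hl'.
  assert (ed : drep H r1 = drep H r2). { rewrite <- d1, <- d2, hl'. reflexivity. }
  assert (er : r1 = r2).
  { apply (i1 r1 r2); [split; auto|split; auto|]. rewrite hl', ed. reflexivity. }
  subst. reflexivity.
Qed.

Lemma B_cover {G : Group} (H : subgroup G) x :
  Good H (drep H x) -> exists b, Bset H b /\ rrel H x b.
Proof.
  intro gx. set (r := rrep H x).
  assert (dr : drep H r = drep H x). { symmetry. apply drep_eq, rrel_drel, rrep_spec. }
  assert (gr : Good H (drep H r)) by (rewrite dr; exact gx).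
  destruct (iotaF_spec H _ gr) as [s1 _].
  assert (rr : rrep H r = r) by apply rrep_idem.
  destruct (s1 r (conj rr eq_refl)) as [_ d1].
  destruct (pt_spec H r _ (eq_sym d1)) as [q1 _].
  exists (pt H r (iotaF H (drep H r) r)). split.
  - exists r. auto.
  - eapply rrel_trans; [apply rrep_spec|]. apply rrel_sym. exact q1.
Qed.

Definition kap_spec {G : Group} (H : subgroup G) (d : G) (kap : G -> G) :=
  (forall l, LeftS H d l -> RightS H d (kap l)) /\
  (forall l1 l2, LeftS H d l1 -> LeftS H d l2 -> kap l1 = kap l2 -> l1 = l2).

Lemma not_good_kap {G : Group} (H : subgroup G) d : ~ Good H d -> exists kap, kap_spec H d kap.
Proof.
  intro hn. destruct (compar {r | RightS H d r} {l | LeftS H d l}) as [[f hf]|[f hf]].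
  - exfalso. apply hn.
    exists (fun x => match excluded_middle_informative (RightS H d x) with
             | left p => proj1_sig (f (exist _ x p)) | right _ => x end).
    split.
    + intros r hr. destruct (excluded_middle_informative (RightS H d r)); [|contradiction].
      apply (proj2_sig (f _)).
    + intros r1 r2 h1 h2.
      destruct (excluded_middle_informative (RightS H d r1)); [|contradiction].
      destruct (excluded_middle_informative (RightS H d r2)); [|contradiction].
      intro h. apply sig_eq in h. apply hf in h. injection h; auto.
  - exists (fun x => match excluded_middle_informative (LeftS H d x) with
             | left p => proj1_sig (f (exist _ x p)) | right _ => x end).
    split.
    + intros r hr. destruct (excluded_middle_informative (LeftS H d r)); [|contradiction].
      apply (proj2_sig (f _)).
    + intros r1 r2 h1 h2.
      destruct (excluded_middle_informative (LeftS H d r1)); [|contradiction].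
      destruct (excluded_middle_informative (LeftS H d r2)); [|contradiction].
      intro h. apply sig_eq in h. apply hf in h. injection h; auto.
Qed.

Lemma drep_lrep {G : Group} (H : subgroup G) w : drep H (lrep H w) = drep H w.
Proof. symmetry. apply drep_eq, lrel_drel, lrep_spec. Qed.

Lemma drep_ginv {G : Group} (H : subgroup G) a b :
  drep H a = drep H b -> drep H (ginv G a) = drep H (ginv G b).
Proof. intro h. apply drep_eq, drel_ginv, drep_inv, h. Qed.

Lemma lrep_ginv_rrep {G : Group} (H : subgroup G) a b :
  lrep H (ginv G a) = lrep H (ginv G b) -> rrep H a = rrep H b.
Proof. intro h. apply rrep_eq. apply lrel_ginv. apply lrep_inv. exact h. Qed.

Lemma kap_good {G : Group} (H : subgroup G) d kap r :
  kap_spec H d kap -> RightS H d r -> Good H (drep H (ginv G r)).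
Proof.
  intros [ks ki] [rr dr].
  exists (fun rho => lrep H (ginv G (kap (lrep H (ginv G rho))))).
  assert (step : forall rho, RightS H (drep H (ginv G r)) rho -> LeftS H d (lrep H (ginv G rho))).
  { intros rho [_ drho]. split; [apply lrep_idem|]. rewrite drep_lrep.
    apply drep_ginv in drho. rewrite !ginv_inv in drho. rewrite drho. exact dr. }
  split.
  - intros rho hrho. pose proof (ks _ (step rho hrho)) as [_ d2].
    split; [apply lrep_idem|]. rewrite drep_lrep. apply drep_ginv. rewrite d2, dr. reflexivity.
  - intros rho1 rho2 h1 h2 h.
    apply lrep_ginv_rrep in h.
    pose proof (ks _ (step rho1 h1)) as [e1 _]. pose proof (ks _ (step rho2 h2)) as [e2 _].
    rewrite e1, e2 in h. apply ki in h; try (apply step; auto).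
    apply lrep_ginv_rrep in h. destruct h1 as [f1 _]. destruct h2 as [f2 _].
    rewrite f1, f2 in h. exact h.
Qed.

Definition injon {A B : Type} (P : A -> Prop) (j : A -> B) :=
  forall x y, P x -> P y -> j x = j y -> x = y.

Lemma cle_sub_ext {A B : Type} (P : A -> Prop) (b0 : B) :
  card_le {x | P x} B -> exists j : A -> B, injon P j.
Proof.
  intros [f hf]. exists (fun x => match excluded_middle_informative (P x) with
                              | left p => f (exist _ x p) | right _ => b0 end).
  intros x y px py. destruct (excluded_middle_informative (P x)); [|contradiction].
  destruct (excluded_middle_informative (P y)); [|contradiction].
  intro h. apply hf in h. injection h; auto.
Qed.

Lemma cle_of_injon {A B : Type} (P : A -> Prop) (j : A -> B) : injon P j -> card_le {x | P x} B.
Proof.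
  intro h. exists (fun x => j (proj1_sig x)). intros [x px] [y py] e. simpl in e.
  apply sig_eq. simpl. apply h; auto.
Qed.

Definition GR {G : Group} (H : subgroup G) (z : G) := lrep H z = z /\ Good H (drep H z).
Definition kapF {G : Group} (H : subgroup G) (d : G) : G -> G :=
  epsilon (inhabits (fun x : G => x)) (kap_spec H d).
Lemma kapF_spec {G : Group} (H : subgroup G) d : ~ Good H d -> kap_spec H d (kapF H d).
Proof. intro h. unfold kapF. apply epsilon_spec. apply not_good_kap, h. Qed.

Lemma rows_le {G : Group} (H : subgroup G) (K : Type) (hK : infinite_card K) :
  card_le {z | GR H z} K -> card_le {z | lrep H z = z} K.
Proof.
  intro hc. pose proof hK as [e he].
  destruct (cle_sub_ext (GR H) (e 0) hc) as [j hj].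
  apply (cle_trans _ (bool * K)); [|apply boolK_le; auto].
  apply (cle_of_injon _ (fun z => if dec (Good H (drep H z)) then (true, j z)
                                   else (false, j (lrep H (ginv G (kapF H (drep H z) z)))))).
  assert (bad : forall z, lrep H z = z -> ~ Good H (drep H z) ->
     GR H (lrep H (ginv G (kapF H (drep H z) z)))
     /\ RightS H (drep H z) (kapF H (drep H z) z)).
  { intros z lz nz. destruct (kapF_spec H _ nz) as [ks _].
    pose proof (ks z (conj lz eq_refl)) as hr.
    split; auto. split; [apply lrep_idem|]. rewrite drep_lrep. eapply kap_good; eauto.
    apply kapF_spec; auto. }
  intros x y lx ly.
  destruct (classic (Good H (drep H x))) as [gx|gx]; destruct (classic (Good H (drep H y))) as [gy|gy];
  [rewrite (dec_t _ gx), (dec_t _ gy)|rewrite (dec_t _ gx), (dec_f _ gy)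
  |rewrite (dec_f _ gx), (dec_t _ gy)|rewrite (dec_f _ gx), (dec_f _ gy)]; intro h;
  injection h; clear h; intros h; try discriminate.
  - apply hj in h; auto; split; auto.
  - destruct (bad x lx gx) as [b1 r1]. destruct (bad y ly gy) as [b2 r2].
    apply hj in h; auto. apply lrep_ginv_rrep in h.
    destruct r1 as [f1 d1]. destruct r2 as [f2 d2]. rewrite f1, f2 in h.
    assert (ed : drep H x = drep H y) by (rewrite <- d1, <- d2, h; reflexivity).
    destruct (kapF_spec H _ gx) as [_ ki].
    apply ki; [split; auto|split; auto|]. rewrite h, ed. reflexivity.
Qed.

Lemma final_contra {G : Group} (H : subgroup G) (K : Type) (hK : infinite_card K)
  (hHK : card_le {x | sg H x} K) (hGK : ~ card_le G K) : card_le {z | GR H z} K -> False.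
Proof.
  intro hc. apply hGK. pose proof (rows_le H K hK hc) as hr.
  apply (cle_trans _ ({z | lrep H z = z} * {x | sg H x})); [|apply prod_le; auto].
  assert (hs : forall x, sg H (gmul G (ginv G (lrep H x)) x)).
  { intro x. apply (lrel_sym H x (lrep H x)), lrep_spec. }
  exists (fun x => (exist (fun z => lrep H z = z) (lrep H x) (lrep_idem H x),
                    exist (sg H) (gmul G (ginv G (lrep H x)) x) (hs x))).
  intros x y h. injection h; intros h2 h1.
  rewrite h1 in h2. apply gcancel_l in h2. exact h2.
Qed.

Definition oval {G : Group} {I : G -> Prop} (o : option {x | I x}) : G :=
  match o with None => gone G | Some i => proj1_sig i end.

Lemma bounded_small (G : Group) (K : Type) (hK : infinite_card K) (Z : G -> Prop) :
  bounded (ent_lt_kappa G K) Z -> card_lt {y | Z y} K.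
Proof.
  intros [E [[I [hI ->]] [x hx]]].
  apply (small_sub _ (option {i | I i})); [|apply small_opt; auto].
  apply (cle_of_injon _ (fun y => epsilon (inhabits None)
                 (fun o : option {i | I i} => y = gmul G (oval o) x))).
  assert (sp : forall y, Z y -> y = gmul G (oval (epsilon (inhabits None)
                 (fun o : option {i | I i} => y = gmul G (oval o) x))) x).
  { intros y zy. apply (epsilon_spec (inhabits None) (fun o : option {i | I i} => y = gmul G (oval o) x)).
    destruct (hx y zy) as [h|[i [hi h]]].
    - exists None. simpl. rewrite gmul1g. exact h.
    - exists (Some (exist _ i hi)). simpl. exact h. }
  intros y1 y2 z1 z2 h. rewrite (sp y1 z1), (sp y2 z2), h. reflexivity.
Qed.

Lemma small_bounded (G : Group) (K : Type) (Z : G -> Prop) :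
  card_lt {y | Z y} K -> bounded (ent_lt_kappa G K) Z.
Proof.
  intro h. exists (ent_I G Z). split.
  - exists Z. split; auto.
  - exists (gone G). intros y zy. unfold ball, ent_I. right. exists y. split; auto.
    rewrite gmulg1. reflexivity.
Qed.

Lemma singleton_small (G : Group) (K : Type) (hK : infinite_card K) (g : G) :
  card_lt {x : G | x = g} K.
Proof.
  pose proof hK as [e he]. split.
  - exists (fun _ => e 0). intros [x px] [y py] _. apply sig_eq. simpl. congruence.
  - intros [f hf]. assert (h : f (e 0) = f (e 1)).
    { apply sig_eq. destruct (f (e 0)) as [a pa], (f (e 1)) as [b pb]. simpl. congruence. }
    apply hf, he in h. discriminate.
Qed.

Lemma asd (G : Group) (K : Type) (hK : infinite_card K) (H : subgroup G) :
  asymp_disjoint (ent_lt_kappa G K) (sg H) (Bset H).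
Proof.
  intros E [I [hI ->]]. apply small_bounded.
  apply (small_sub _ (option {i | I i} * option {i | I i})); [|apply small_sq; auto; apply small_opt; auto].
  set (P1 := fun y (o : option {i | I i}) => sg H (gmul G (ginv G (oval o)) y)).
  set (P2 := fun y (o : option {i | I i}) => exists b, Bset H b /\ y = gmul G (oval o) b).
  apply (cle_of_injon _ (fun y => (epsilon (inhabits None) (P1 y), epsilon (inhabits None) (P2 y)))).
  assert (s1 : forall y, ballS (ent_I G I) (sg H) y -> P1 y (epsilon (inhabits None) (P1 y))).
  { intros y [a [ha h]]. apply epsilon_spec. destruct h as [h|[i [hi h]]].
    - exists None. unfold P1; simpl. rewrite ginv_one, gmul1g, h. exact ha.
    - exists (Some (exist _ i hi)). unfold P1; simpl. rewrite h, gmulA, gmulVg, gmul1g. exact ha. }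
  assert (s2 : forall y, ballS (ent_I G I) (Bset H) y -> P2 y (epsilon (inhabits None) (P2 y))).
  { intros y [a [ha h]]. apply epsilon_spec. destruct h as [h|[i [hi h]]].
    - exists None. exists a. simpl. rewrite gmul1g. auto.
    - exists (Some (exist _ i hi)). exists a. simpl. auto. }
  intros y1 y2 [z1 w1] [z2 w2] h. injection h; intros h2 h1.
  pose proof (s1 y1 z1) as q1. pose proof (s1 y2 z2) as q2. rewrite h1 in q1.
  pose proof (s2 y1 w1) as [b1 [hb1 e1]]. pose proof (s2 y2 w2) as [b2 [hb2 e2]].
  rewrite h2 in e1.
  set (g1 := oval (epsilon (inhabits None) (P1 y2))) in *.
  set (g2 := oval (epsilon (inhabits None) (P2 y2))) in *.
  assert (hb : b1 = b2).
  { apply (B_unique H); auto. unfold lrel.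
    assert (hb1' : b1 = gmul G (ginv G g2) y1) by (rewrite e1, gmulA, gmulVg, gmul1g; reflexivity).
    assert (hb2' : b2 = gmul G (ginv G g2) y2) by (rewrite e2, gmulA, gmulVg, gmul1g; reflexivity).
    rewrite hb1', hb2', ginv_mul, ginv_inv, <- gmulA, (gmulA G g2), gmulgV, gmul1g.
    unfold P1 in q1, q2. pose proof (sgm H _ _ (sgi H _ q1) q2) as q.
    rewrite ginv_mul, ginv_inv, <- gmulA, (gmulA G g1), gmulgV, gmul1g in q. exact q. }
  rewrite e1, e2, hb. reflexivity.
Qed.

Lemma cle_injon_pair {A B C : Type} (P : A -> Prop) (Q : B -> Prop) (F : A -> B * C) :
  (forall x, P x -> Q (fst (F x))) -> injon P F -> card_le {x | P x} ({b | Q b} * C).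
Proof.
  intros hq hi.
  exists (fun x => (exist Q (fst (F (proj1_sig x))) (hq _ (proj2_sig x)), snd (F (proj1_sig x)))).
  intros [x px] [y py] h. simpl in h. injection h; intros h2 h1. clear h.
  apply sig_eq; simpl. apply hi; auto.
  rewrite (surjective_pairing (F x)), (surjective_pairing (F y)), h1, h2. reflexivity.
Qed.

Lemma core (G : Group) (K : Type) (hK : infinite_card K) (H : subgroup G)
  (hHK : card_le {x | sg H x} K) (hKH : card_le K {x | sg H x}) (hGK : ~ card_le G K) :
  ~ normal_ballean (ent_lt_kappa G K).
Proof.
  intro hn. pose proof hK as [e he].
  destruct (hn (sg H) (Bset H) (asd G K hK H)) as [U [V [hU [hV hUV]]]].
  apply (final_contra H K hK hHK hGK).
  assert (hpt : forall g, exists y, lrel H g y /\ U y).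
  { intro g. apply NNPP; intro hn'.
    assert (hb := hU _ (ex_intro _ (fun x => x = g) (conj (singleton_small G K hK g) eq_refl))).
    apply bounded_small in hb; auto. destruct hb as [_ hb]. apply hb.
    destruct hKH as [hk hhk].
    set (Yg := fun y => ballS (ent_I G (fun x => x = g)) (sg H) y /\ ~ U y).
    assert (mem : forall k, Yg (gmul G g (proj1_sig (hk k)))).
    { intro k. split.
      - exists (proj1_sig (hk k)). split; [apply (proj2_sig (hk k))|].
        right. exists g. split; reflexivity.
      - intro hu. apply hn'. exists (gmul G g (proj1_sig (hk k))). split; auto.
        unfold lrel. rewrite gmulA, gmulVg, gmul1g. apply (proj2_sig (hk k)). }
    exists (fun k => exist Yg (gmul G g (proj1_sig (hk k))) (mem k)).
    intros k1 k2 h. apply (f_equal (@proj1_sig _ _)) in h. simpl in h.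
    apply gcancel_l in h. apply sig_eq in h. apply hhk; exact h. }
  set (Yv := fun h y => ballS (ent_I G (fun x => x = h)) (Bset H) y /\ ~ V y).
  assert (hY : forall h, exists j : G -> K, injon (Yv h) j).
  { intro h. apply (cle_sub_ext _ (e 0)).
    assert (hb := hV _ (ex_intro _ (fun x => x = h) (conj (singleton_small G K hK h) eq_refl))).
    apply bounded_small in hb; auto. destruct hb as [hb _]. exact hb. }
  set (jF := fun h => epsilon (inhabits (fun _ : G => e 0)) (fun j => injon (Yv h) j)).
  assert (hjF : forall h, injon (Yv h) (jF h)).
  { intro h. unfold jF. apply epsilon_spec. apply hY. }
  set (u := fun z => epsilon (inhabits z) (fun y => lrel H z y /\ U y)).
  assert (hu : forall z, lrel H z (u z) /\ U (u z)).
  { intro z. unfold u. apply epsilon_spec. apply hpt. }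
  set (bz := fun z => epsilon (inhabits z) (fun b => Bset H b /\ rrel H (u z) b)).
  assert (hbz : forall z, GR H z -> Bset H (bz z) /\ rrel H (u z) (bz z)).
  { intros z [_ gz]. unfold bz. apply epsilon_spec. apply B_cover.
    assert (d : drep H (u z) = drep H z).
    { symmetry. apply drep_eq, lrel_drel. apply hu. }
    rewrite d. exact gz. }
  set (hz := fun z => gmul G (u z) (ginv G (bz z))).
  assert (hYz : forall z, GR H z -> Yv (hz z) (u z)).
  { intros z gz. destruct (hbz z gz) as [b1 b2]. split.
    - exists (bz z). split; auto. right. exists (hz z). split; auto. unfold hz.
      rewrite <- gmulA, gmulVg, gmulg1. reflexivity.
    - intro hv. apply (hUV (u z)). split; auto. apply hu. }
  apply (cle_trans _ ({x | sg H x} * K)); [|apply prod_le; auto; apply cle_refl].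
  apply (cle_injon_pair _ _ (fun z => (hz z, jF (hz z) (u z)))).
  - intros z gz. simpl. apply (hbz z gz).
  - intros z1 z2 g1 g2 h. injection h; intros h2 h1.
    rewrite h1 in h2. apply (hjF (hz z2)) in h2; [|rewrite <- h1; apply hYz; auto|apply hYz; auto].
    destruct g1 as [l1 _]. destruct g2 as [l2 _]. rewrite <- l1, <- l2. apply lrep_eq.
    eapply lrel_trans; [apply hu|]. rewrite h2. apply lrel_sym, hu.
Qed.

Fixpoint ev (G : Group) {K : Type} (f : K -> G) (l : list (bool * K)) : G :=
  match l with
  | nil => gone G
  | cons (b, k) l => gmul G (if b then f k else ginv G (f k)) (ev G f l)
  end.

Lemma ev_app (G : Group) {K} (f : K -> G) l1 l2 : ev G f (l1 ++ l2) = gmul G (ev G f l1) (ev G f l2).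
Proof.
  induction l1 as [|[b k] l1 IH]; simpl.
  - rewrite gmul1g. reflexivity.
  - rewrite IH, gmulA. reflexivity.
Qed.

Definition flip {K : Type} (l : list (bool * K)) := rev (map (fun p => (negb (fst p), snd p)) l).

Lemma ev_flip (G : Group) {K} (f : K -> G) l : ev G f (flip l) = ginv G (ev G f l).
Proof.
  induction l as [|[b k] l IH]; unfold flip in *; simpl.
  - rewrite ginv_one. reflexivity.
  - rewrite ev_app, IH, ginv_mul. simpl. rewrite gmulg1. destruct b; simpl; auto.
    rewrite ginv_inv. reflexivity.
Qed.

Definition genH (G : Group) {K : Type} (f : K -> G) : subgroup G.
Proof.
  refine (@Build_subgroup G (fun x => exists l, x = ev G f l) _ _ _).
  - exists nil. reflexivity.
  - intros x y [l1 ->] [l2 ->]. exists (l1 ++ l2). rewrite ev_app. reflexivity.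
  - intros x [l ->]. exists (flip l). rewrite ev_flip. reflexivity.
Defined.

Theorem theorem1p17 (G : Group) (K : Type) :
  infinite_card K -> card_lt K (carrier G) ->
  ~ normal_ballean (ent_lt_kappa G K).
Proof.
  intros hK [[f hf] hnGK].
  pose proof hK as [e he].
  apply (core G K hK (genH G f)); auto.
  - apply (cle_trans _ (list (bool * K))).
    + exists (fun x => epsilon (inhabits nil) (fun l => proj1_sig x = ev G f l)).
      intros [x [l1 px]] [y [l2 py]] h. simpl in h. apply sig_eq. simpl.
      rewrite (epsilon_spec (inhabits nil) (fun l => x = ev G f l) (ex_intro _ l1 px)).
      rewrite (epsilon_spec (inhabits nil) (fun l => y = ev G f l) (ex_intro _ l2 py)).
      rewrite h. reflexivity.
    + apply (cle_trans _ (bool * K)); [|apply boolK_le; auto].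
      apply list_le. exists (fun n => (true, e n)). intros m n h. injection h. auto.
  - assert (hm : forall k, sg (genH G f) (f k)).
    { intro k. exists (cons (true, k) nil). simpl. rewrite gmulg1. reflexivity. }
    exists (fun k => exist _ (f k) (hm k)). intros a b h.
    apply (f_equal (@proj1_sig _ _)) in h. simpl in h. auto.
Qed.
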